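(* Let $p,n\in\mathbb{N}$ with $p,n\ge1$, and $r\in\mathbb{N}$ with $r\le p$, and assume $n\ge\max\{p+1,\;p+\lfloor p/2\rfloor-1\}$. Then $$X^{p,r,0}=(n+1)^{2r-1}\big(T_n^{\bm\alpha}-H_n^{\bm\alpha,2}\big),$$ where $\bm\alpha=(\alpha_0,\dots,\alpha_p)$ is given by $\alpha_k=(-1)^r\mathcal{N}_{2p+1}^{(2r)}(p+1-k)$, $k=0,\dots,p$.
   Context: Cardinal B-spline: $\mathcal{N}_0(t)=1$ for $t\in[0,1)$, $0$ otherwise; $\mathcal{N}_p(t)=\frac{t}{p}\mathcal{N}_{p-1}(t)+\frac{p+1-t}{p}\mathcal{N}_{p-1}(t-1)$, $p\ge1$ (support $[0,p+1]$, piecewise polynomial with integer breakpoints, $C^{p-1}$); $\mathcal{N}_{2p+1}\in C^{2p}$ so $\mathcal{N}_{2p+1}^{(2r)}$ is defined for $r\le p$. Dirichlet basis: for $c\in\mathbb{R}$ put $B^{D}_c(x)=\mathcal{N}_p\big((n+1)x-c+\tfrac{p+1}{2}\big)$ and for $i=1,\dots,n$, $x\in[0,1]$, $N^p_{i,0}(x)=\sum_{m\in\mathbb{Z}}\big(B^{D}_{i+2m(n+1)}(x)-B^{D}_{-i+2m(n+1)}(x)\big)$. $X^{p,r,0}_{i,j}=\int_0^1 (N^p_{i,0})^{(r)}(N^p_{j,0})^{(r)}\,\mathrm{d}x$ ($r=0$ gives the mass matrix, $r=1$ the stiffness matrix). For $\bm\alpha\in\mathbb{R}^{p+1}$ and $n\ge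 p+1$, with the convention $\alpha_k=0$ for $k>p$: $T_n^{\bm\alpha}$ is the $n\times n$ symmetric banded Toeplitz matrix with $(T_n^{\bm\alpha})_{i,j}=\alpha_{|i-j|}$; $H_n^{\bm\alpha,2}$ is the $n\times n$ Hankel-type matrix with $(H_n^{\bm\alpha,2})_{i,j}=\alpha_{i+j}+\alpha_{2n+2-i-j}$. *)

(* Defs.v *)
From Stdlib Require Import Reals Lra Lia ZArith Arith.
From Coquelicot Require Import Coquelicot.
Open Scope R_scope.

Fixpoint cardN (p : nat) (t : R) : R :=
  match p with
  | O => if Rle_dec 0 t then (if Rlt_dec t 1 then 1 else 0) else 0
  | S q => t / INR (S q) * cardN q t
           + (INR (S q) + 1 - t) / INR (S q) * cardN q (t - 1)
  end.

(* Sum over m in Z of f m, written as the series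
   sum_{k>=0} (f k + f (-k-1)).  In our use only finitely many terms are
   nonzero, so this is the plain (finite) sum over Z. *)
Definition sumZ (f : Z -> R) : R :=
  Series (fun k : nat => f (Z.of_nat k) + f (- Z.of_nat k - 1)%Z).

Definition BD (p n : nat) (c : R) (x : R) : R :=
  cardN p ((INR n + 1) * x - c + (INR p + 1) / 2).

Definition NDir (p n i : nat) (x : R) : R :=
  sumZ (fun m : Z =>
          BD p n (INR i + 2 * IZR m * (INR n + 1)) x
          - BD p n (- INR i + 2 * IZR m * (INR n + 1)) x).

Definition Xmat (p r n i j : nat) : R :=
  RInt (fun x => Derive_n (NDir p n i) r x * Derive_n (NDir p n j) r x) 0 1.

Definition alpha (p r k : nat) : R :=
  if Nat.leb k p
  then (-1) ^ r * Derive_n (cardN (2 * p + 1)) (2 * r) (INR (p + 1) - INR k)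
  else 0.

(* (T_n^alpha)_{i,j} = alpha_{|i-j|} *)
Definition Tmat (p r i j : nat) : R := alpha p r ((i - j) + (j - i))%nat.

Definition Hmat (p r n i j : nat) : R :=
  alpha p r (i + j) + alpha p r (2 * n + 2 - i - j).

(* Main.v *)
Require Import Defs.
From Stdlib Require Import Reals Lra Lia ZArith Arith List.
From Coquelicot Require Import Coquelicot.
Open Scope R_scope.

Definition tp (m : nat) (u : R) : R := if Rle_dec 0 u then u ^ m else 0.
Definition tpl (m : nat) (u : R) : R := if Rlt_dec 0 u then u ^ m else 0.
Definition gg (m : nat) (u : R) : R := tp m u / INR (fact m).
Definition hh (m : nat) (u : R) : R := tpl m u / INR (fact m).

Fixpoint D (q : nat) (f : R -> R) (t : R) : R :=
  match q with O => f t | S q' => D q' f t - D q' f (t - 1) end.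

Lemma D_ext q f h t : (forall s, f s = h s) -> D q f t = D q h t.
Proof. intros H; revert t; induction q; intros t; simpl; rewrite ?IHq; auto. Qed.

Lemma D_lin q f h a b t :
  D q (fun s => a * f s + b * h s) t = a * D q f t + b * D q h t.
Proof. revert t; induction q; intros t; simpl; auto. rewrite !IHq; ring. Qed.

Lemma D_scal q f a t : D q (fun s => a * f s) t = a * D q f t.
Proof. revert t; induction q; intros t; simpl; auto. rewrite !IHq; ring. Qed.

Lemma D_shift q f c t : D q (fun s => f (s + c)) t = D q f (t + c).
Proof.
  revert t; induction q; intros t; simpl; auto.
  rewrite !IHq. replace (t - 1 + c) with (t + c - 1) by ring. reflexivity.
Qed.

Lemma D_comp q q' f t : D q (D q' f) t = D (q + q') f t.
Proof. revert t; induction q; intros t; simpl; auto. rewrite !IHq; auto. Qed.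

Lemma D_const q c t : D (S q) (fun _ => c) t = 0.
Proof.
  revert t; induction q; intros t; simpl in *; [ring|].
  rewrite !IHq. ring.
Qed.

Lemma D_leib q h t :
  D q (fun s => s * h s) t = t * D q h t + INR q * D (pred q) h (t - 1).
Proof.
  revert t; induction q; intros t; simpl; [ring|].
  rewrite !IHq. destruct q; simpl; [ring|].
  rewrite ?S_INR. ring_simplify.
  replace (t - 1 - 1) with (t - 2) by ring. ring.
Qed.

Lemma D_pow m : forall q t, (m < q)%nat -> D q (fun s => s ^ m) t = 0.
Proof.
  induction m; intros q t Hq.
  - destruct q; [lia|]. apply (D_const q 1 t).
  - simpl. rewrite D_leib. rewrite IHm by lia. destruct q; [lia|]. simpl pred.
    rewrite IHm by lia. ring.
Qed.

Lemma D_refl q f t : D q f t = (-1) ^ q * D q (fun s => f (- s)) (INR q - t).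
Proof.
  revert t; induction q; intros t.
  - simpl. replace (0 - t) with (- t) by ring. rewrite Ropp_involutive. ring.
  - cbn [D]. change ((-1)^(S q)) with (-1 * (-1)^q). rewrite !IHq. rewrite S_INR.
    replace (INR q + 1 - t - 1) with (INR q - t) by ring.
    replace (INR q - (t - 1)) with (INR q + 1 - t) by ring. ring.
Qed.

Lemma tp_tpl m x : tp m x + (-1) ^ m * tpl m (- x) = x ^ m.
Proof.
  unfold tp, tpl. destruct (Rle_dec 0 x); destruct (Rlt_dec 0 (-x)); try lra.
  all: try ring.
  all: rewrite <- Rpow_mult_distr; replace (-1 * - x) with x by ring; ring.
Qed.

Lemma tpl_tp m x : tpl m x + (-1) ^ m * tp m (- x) = x ^ m.
Proof.
  unfold tp, tpl. destruct (Rlt_dec 0 x); destruct (Rle_dec 0 (-x)); try lra.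
  all: try ring.
  all: rewrite <- Rpow_mult_distr; replace (-1 * - x) with x by ring; ring.
Qed.

Lemma m1pow_sq m : (-1) ^ m * (-1) ^ m = 1.
Proof. rewrite <- Rpow_mult_distr. replace (-1 * -1) with 1 by ring. apply pow1. Qed.

Lemma fact_nz m : INR (fact m) <> 0.
Proof. apply not_0_INR. apply fact_neq_0. Qed.

Lemma gg_neg m s : gg m (- s) = (-1) ^ m * (/ INR (fact m) * s ^ m + (-1) * hh m s).
Proof.
  unfold gg, hh. pose proof (tpl_tp m s). pose proof (m1pow_sq m).
  pose proof (fact_nz m).
  assert (tp m (- s) = (-1) ^ m * (s ^ m - tpl m s)).
  { rewrite <- H. transitivity ((-1)^m*(-1)^m * tp m (-s)); [rewrite H0; ring | ring]. }
  rewrite H2. field. auto.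
Qed.

Lemma hh_neg m s : hh m (- s) = (-1) ^ m * (/ INR (fact m) * s ^ m + (-1) * gg m s).
Proof.
  unfold gg, hh. pose proof (tp_tpl m s). pose proof (m1pow_sq m).
  pose proof (fact_nz m).
  assert (tpl m (- s) = (-1) ^ m * (s ^ m - tp m s)).
  { rewrite <- H. transitivity ((-1)^m*(-1)^m * tpl m (-s)); [rewrite H0; ring | ring]. }
  rewrite H2. field. auto.
Qed.

Lemma R1g Q m u : (m < Q)%nat ->
  D Q (gg m) u = (-1) ^ (Q + m + 1) * D Q (hh m) (INR Q - u).
Proof.
  intros Hm. rewrite D_refl.
  rewrite (D_ext Q _ (fun s => (-1) ^ m * (/ INR (fact m) * s ^ m + (-1) * hh m s)))
    by (intros; apply gg_neg).
  rewrite D_scal, D_lin, D_pow by auto. rewrite !pow_add. ring.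
Qed.

Lemma R1h Q m u : (m < Q)%nat ->
  D Q (hh m) u = (-1) ^ (Q + m + 1) * D Q (gg m) (INR Q - u).
Proof.
  intros Hm. rewrite D_refl.
  rewrite (D_ext Q _ (fun s => (-1) ^ m * (/ INR (fact m) * s ^ m + (-1) * gg m s)))
    by (intros; apply hh_neg).
  rewrite D_scal, D_lin, D_pow by auto. rewrite !pow_add. ring.
Qed.

Lemma s_gg p s : s * gg p s = INR (S p) * gg (S p) s.
Proof.
  unfold gg, tp. rewrite fact_simpl, mult_INR.
  pose proof (fact_nz p). pose proof (pos_INR p). rewrite S_INR.
  destruct (Rle_dec 0 s); simpl; field; lra.
Qed.

Lemma cardN_D p t : cardN p t = D (S p) (gg p) t.
Proof.
  revert t; induction p; intros t.
  - simpl. unfold gg, tp. simpl.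
    destruct (Rle_dec 0 t); destruct (Rlt_dec t 1); destruct (Rle_dec 0 (t - 1)); try lra.
  - assert (L : forall u, D (S p) (fun s => s * gg p s) u = INR (S p) * D (S p) (gg (S p)) u).
    { intros u. rewrite <- D_scal. apply D_ext. intros; apply s_gg. }
    pose proof (L t) as L1. pose proof (L (t - 1)) as L2.
    rewrite D_leib in L1, L2. simpl pred in L1, L2.
    cbn [cardN]. rewrite !IHp.
    change (D (S (S p)) (gg (S p)) t) with
      (D (S p) (gg (S p)) t - D (S p) (gg (S p)) (t - 1)).
    assert (E : D (S p) (gg p) (t - 1) = D p (gg p) (t - 1) - D p (gg p) (t - 1 - 1))
      by reflexivity.
    assert (HP : INR (S p) <> 0) by (apply not_0_INR; lia).
    assert (Z1 : D (S p) (gg (S p)) t = (t * D (S p) (gg p) t + INR (S p) * D p (gg p) (t - 1)) / INR (S p))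
      by (rewrite L1; field; auto).
    assert (Z2 : D (S p) (gg (S p)) (t-1) = ((t - 1) * D (S p) (gg p) (t - 1) + INR (S p) * D p (gg p) (t - 1 - 1)) / INR (S p))
      by (rewrite L2; field; auto).
    rewrite Z1, Z2, E. field. auto.
Qed.

Lemma ball_R (x e y : R) : ball x e y -> Rabs (y - x) < e.
Proof. unfold ball; simpl; unfold AbsRing_ball, abs, minus, plus, opp; simpl. auto. Qed.

Lemma isd_minus (f g : R -> R) x df dg : is_derive f x df -> is_derive g x dg ->
  is_derive (fun y => f y - g y) x (df - dg).
Proof. intros H1 H2. exact (is_derive_minus f g x df dg H1 H2). Qed.
Lemma isd_plus (f g : R -> R) x df dg : is_derive f x df -> is_derive g x dg ->
  is_derive (fun y => f y + g y) x (df + dg).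
Proof. intros H1 H2. exact (is_derive_plus f g x df dg H1 H2). Qed.

Lemma pow_le1 h k : 0 <= h <= 1 -> h ^ k <= 1.
Proof.
  intros H; induction k; simpl; [lra|].
  assert (0 <= h ^ k) by (apply pow_le; lra). nra.
Qed.

Lemma tp_deriv m u : (1 <= m)%nat -> ((2 <= m)%nat \/ u <> 0) ->
  is_derive (tp m) u (INR m * tp (m - 1) u).
Proof.
  intros Hm Hc.
  destruct (Rlt_dec 0 u) as [Hp|Hp]; [|destruct (Rlt_dec u 0) as [Hn|Hn]].
  - apply (is_derive_ext_loc (fun y => y ^ m)).
    + exists (mkposreal u Hp). intros y Hy. apply ball_R in Hy. simpl in Hy.
      unfold tp. destruct (Rle_dec 0 y); auto. exfalso. apply Rabs_def2 in Hy. lra.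
    + unfold tp. destruct (Rle_dec 0 u); [|lra].
      replace (m - 1)%nat with (pred m) by lia.
      apply is_derive_Reals. apply derivable_pt_lim_pow.
  - apply (is_derive_ext_loc (fun y => 0)).
    + assert (Hn' : 0 < - u) by lra. exists (mkposreal (-u) Hn'). intros y Hy.
      apply ball_R in Hy. simpl in Hy.
      unfold tp. destruct (Rle_dec 0 y); auto. exfalso. apply Rabs_def2 in Hy. lra.
    + unfold tp. destruct (Rle_dec 0 u); [lra|]. rewrite Rmult_0_r. apply (is_derive_const 0).
  - assert (u = 0) by lra. subst u. destruct Hc as [Hc|Hc]; [|lra].
    unfold tp at 2. destruct (Rle_dec 0 0); [|lra].
    destruct m as [|[|k]]; try lia. simpl (S (S k) - 1)%nat.
    rewrite pow_i by lia. rewrite Rmult_0_r.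
    apply is_derive_Reals. intros eps He.
    assert (Hd : 0 < Rmin 1 eps) by (apply Rmin_glb_lt; lra).
    exists (mkposreal _ Hd). intros h Hh0 Hh. simpl in Hh.
    pose proof (Rmin_l 1 eps). pose proof (Rmin_r 1 eps).
    unfold tp. rewrite Rplus_0_l. destruct (Rle_dec 0 0); [|lra].
    rewrite pow_i by lia.
    destruct (Rle_dec 0 h).
    + replace ((h ^ S (S k) - 0) / h - 0) with (h * h ^ k) by (simpl; field; auto).
      assert (h ^ k <= 1) by (apply pow_le1; apply Rabs_def2 in Hh; lra).
      assert (0 <= h ^ k) by (apply pow_le; lra).
      rewrite Rabs_right by nra. apply Rabs_def2 in Hh. nra.
    + replace ((0 - 0) / h - 0) with 0 by (field; auto). rewrite Rabs_R0. lra.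
Qed.

Lemma gg_deriv m u : ((1 <= m)%nat \/ u <> 0) -> is_derive (gg (S m)) u (gg m u).
Proof.
  intros Hc. unfold gg.
  apply (is_derive_ext (fun y => / INR (fact (S m)) * tp (S m) y)).
  { intros t; unfold Rdiv; apply Rmult_comm. }
  replace (tp m u / INR (fact m)) with (/ INR (fact (S m)) * (INR (S m) * tp (S m - 1) u)).
  - apply is_derive_scal. apply tp_deriv; [lia|]. destruct Hc; [left; lia|right; auto].
  - replace (S m - 1)%nat with m by lia. rewrite fact_simpl, mult_INR.
    pose proof (fact_nz m). assert (INR (S m) <> 0) by (apply not_0_INR; lia).
    field; auto.
Qed.

Lemma D_deriv_aff (f f' : R -> R) (lam x : R) q : forall beta,
  (forall k, (k <= q)%nat -> is_derive f (lam * x + beta - INR k) (f' (lam * x + beta - INR k))) ->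
  is_derive (fun y => D q f (lam * y + beta)) x (lam * D q f' (lam * x + beta)).
Proof.
  induction q; intros beta H.
  - simpl. specialize (H O (le_n _)). simpl in H. rewrite Rminus_0_r in H.
    assert (Hl : is_derive (fun y => lam * y + beta) x lam).
    { auto_derive; auto; ring. }
    exact (is_derive_comp f _ x _ _ H Hl).
  - cbn [D].
    apply (is_derive_ext (fun y => D q f (lam * y + beta) - D q f (lam * y + (beta - 1)))).
    { intros t. replace (lam * t + (beta - 1)) with (lam * t + beta - 1) by ring. auto. }
    replace (lam * (D q f' (lam * x + beta) - D q f' (lam * x + beta - 1)))
      with (lam * D q f' (lam * x + beta) - lam * D q f' (lam * x + (beta - 1))).
    + apply isd_minus.
      * apply IHq. intros k Hk. apply H. lia.
      * apply IHq. intros k Hk.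
        replace (lam * x + (beta - 1) - INR k) with (lam * x + beta - INR (S k)) by (rewrite S_INR; ring).
        apply H. lia.
    + replace (lam * x + (beta - 1)) with (lam * x + beta - 1) by ring. ring.
Qed.

Lemma Dn_gen (f : R -> R) (F : nat -> R -> R) (K : nat) :
  (forall y, f y = F 0%nat y) ->
  (forall k y, (k < K)%nat -> is_derive (F k) y (F (S k) y)) ->
  forall k y, (k <= K)%nat -> Derive_n f k y = F k y.
Proof.
  intros H0 HS k. induction k; intros y Hk; simpl; auto.
  rewrite (Derive_ext _ (F k)) by (intros; apply IHk; lia).
  apply is_derive_unique. apply HS. lia.
Qed.

Lemma cardN_supp p u : (u < 0 \/ INR p + 1 <= u) -> cardN p u = 0.
Proof.
  revert u; induction p; intros u Hu.
  - simpl in *. destruct (Rle_dec 0 u); destruct (Rlt_dec u 1); auto; lra.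
  - cbn [cardN]. rewrite S_INR in *. destruct Hu; rewrite !IHp by lra; ring.
Qed.

Lemma Series_fin (a : nat -> R) : (forall k, (2 <= k)%nat -> a k = 0) ->
  Series a = a 0%nat + a 1%nat.
Proof.
  intros H. apply is_series_unique. unfold is_series.
  apply (filterlim_ext_loc (fun _ => a 0%nat + a 1%nat)); [|apply filterlim_const].
  exists 1%nat. intros N HN. induction N; [lia|].
  rewrite sum_Sn. destruct N.
  - rewrite sum_O. reflexivity.
  - rewrite IHN by lia. rewrite (H (S (S N))) by lia. exact (eq_sym (Rplus_0_r _)).
Qed.

Definition Phi (p m : nat) (y : R) : R := D (S p) (gg m) y.

Definition Fi (p n i k : nat) (x : R) : R :=
  (INR n + 1) ^ k *
  (Phi p (p - k) ((INR n + 1) * x - INR i + (INR p + 1) / 2)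
   - Phi p (p - k) ((INR n + 1) * x + INR i + (INR p + 1) / 2)
   - Phi p (p - k) ((INR n + 1) * x + INR i - 2 * (INR n + 1) + (INR p + 1) / 2)).

Lemma NDir_loc (p n i : nat) (y : R) : (1 <= p)%nat -> (p + 1 <= n)%nat -> (1 <= i <= n)%nat ->
  0 < y < 1 -> NDir p n i y = Fi p n i 0 y.
Proof.
  intros Hp Hn Hi Hy.
  assert (Rp : 1 <= INR p) by (apply (le_INR 1); lia).
  assert (Rn : INR p + 1 <= INR n) by (rewrite <- S_INR; apply le_INR; lia).
  assert (Ri1 : 1 <= INR i) by (apply (le_INR 1); lia).
  assert (Ri2 : INR i <= INR n) by (apply le_INR; lia).
  assert (Z1 : forall m : Z, (1 <= m)%Z \/ (m <= -1)%Z ->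
     BD p n (INR i + 2 * IZR m * (INR n + 1)) y = 0).
  { intros m Hm. unfold BD. apply cardN_supp.
    destruct Hm as [Hm|Hm]; apply IZR_le in Hm; [left|right]; nra. }
  assert (Z2 : forall m : Z, (2 <= m)%Z \/ (m <= -1)%Z ->
     BD p n (- INR i + 2 * IZR m * (INR n + 1)) y = 0).
  { intros m Hm. unfold BD. apply cardN_supp.
    destruct Hm as [Hm|Hm]; apply IZR_le in Hm; [left|right]; nra. }
  unfold NDir, sumZ. rewrite Series_fin.
  - rewrite (Z1 (- Z.of_nat 0 - 1)%Z), (Z2 (- Z.of_nat 0 - 1)%Z), (Z1 (Z.of_nat 1)),
      (Z1 (- Z.of_nat 1 - 1)%Z), (Z2 (- Z.of_nat 1 - 1)%Z) by (simpl; lia).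
    change (Z.of_nat 0) with 0%Z. change (Z.of_nat 1) with 1%Z.
    unfold Fi, BD, Phi. rewrite !cardN_D. rewrite Nat.sub_0_r. simpl (IZR 0). simpl (IZR 1).
    replace ((INR n + 1) * y - (INR i + 2 * 0 * (INR n + 1)) + (INR p + 1) / 2)
      with ((INR n + 1) * y - INR i + (INR p + 1) / 2) by ring.
    replace ((INR n + 1) * y - (- INR i + 2 * 0 * (INR n + 1)) + (INR p + 1) / 2)
      with ((INR n + 1) * y + INR i + (INR p + 1) / 2) by ring.
    replace ((INR n + 1) * y - (- INR i + 2 * 1 * (INR n + 1)) + (INR p + 1) / 2)
      with ((INR n + 1) * y + INR i - 2 * (INR n + 1) + (INR p + 1) / 2) by ring.
    simpl pow. ring.
  - intros k Hk. rewrite Z1, Z2, Z1, Z2; try lia. ring.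
Qed.

Lemma Phi_deriv p m lam beta x : (1 <= m)%nat ->
  ((2 <= m)%nat \/ forall k, (k <= S p)%nat -> lam * x + beta - INR k <> 0) ->
  is_derive (fun y => Phi p m (lam * y + beta)) x (lam * Phi p (m - 1) (lam * x + beta)).
Proof.
  intros Hm Hc. destruct m as [|m']; [lia|]. replace (S m' - 1)%nat with m' by lia.
  unfold Phi. apply D_deriv_aff. intros k Hk. apply gg_deriv.
  destruct Hc as [Hc|Hc]; [left; lia|right; apply Hc; auto].
Qed.

Definition offbp (p n i : nat) (x : R) : Prop :=
  forall k, (k <= S p)%nat ->
    (INR n + 1) * x + (- INR i + (INR p + 1) / 2) - INR k <> 0 /\
    (INR n + 1) * x + (INR i + (INR p + 1) / 2) - INR k <> 0 /\
    (INR n + 1) * x + (INR i - 2 * (INR n + 1) + (INR p + 1) / 2) - INR k <> 0.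

Lemma Fi_deriv p n i k x : (k < p)%nat -> ((k + 2 <= p)%nat \/ offbp p n i x) ->
  is_derive (Fi p n i k) x (Fi p n i (S k) x).
Proof.
  intros Hk Hc.
  set (lam := INR n + 1). set (s := (INR p + 1) / 2).
  set (b1 := - INR i + s). set (b2 := INR i + s). set (b3 := INR i - 2 * lam + s).
  apply (is_derive_ext (fun y => lam ^ k * (Phi p (p - k) (lam * y + b1)
     - Phi p (p - k) (lam * y + b2) - Phi p (p - k) (lam * y + b3)))).
  { intros t. unfold Fi. fold lam s. unfold b1, b2, b3.
    replace (lam * t + (- INR i + s)) with (lam * t - INR i + s) by ring.
    replace (lam * t + (INR i + s)) with (lam * t + INR i + s) by ring.
    replace (lam * t + (INR i - 2 * lam + s)) with (lam * t + INR i - 2 * lam + s) by ring.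
    reflexivity. }
  assert (E : Fi p n i (S k) x = lam ^ k * (lam * Phi p (p - k - 1) (lam * x + b1)
     - lam * Phi p (p - k - 1) (lam * x + b2) - lam * Phi p (p - k - 1) (lam * x + b3))).
  { unfold Fi. fold lam s. unfold b1, b2, b3. replace (p - S k)%nat with (p - k - 1)%nat by lia.
    replace (lam * x + (- INR i + s)) with (lam * x - INR i + s) by ring.
    replace (lam * x + (INR i + s)) with (lam * x + INR i + s) by ring.
    replace (lam * x + (INR i - 2 * lam + s)) with (lam * x + INR i - 2 * lam + s) by ring.
    simpl pow. ring. }
  rewrite E. apply is_derive_scal.
  assert (H1 : (1 <= p - k)%nat) by lia.
  apply isd_minus; [apply isd_minus|]; apply Phi_deriv; auto;
    (destruct Hc as [Hc|Hc]; [left; lia|right; intros kk Hkk; apply Hc; auto]).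
Qed.

Lemma Dn_NDir p n i r x : (1 <= p)%nat -> (p + 1 <= n)%nat -> (1 <= i <= n)%nat ->
  (r <= p)%nat -> 0 < x < 1 -> ((r < p)%nat \/ offbp p n i x) ->
  Derive_n (NDir p n i) r x = Fi p n i r x.
Proof.
  intros Hp Hn Hi Hr Hx Hc.
  rewrite (Derive_n_ext_loc _ (Fi p n i 0)).
  2:{ assert (He : 0 < Rmin x (1 - x)) by (apply Rmin_glb_lt; lra).
      exists (mkposreal _ He). intros y Hy. apply ball_R in Hy. simpl in Hy.
      pose proof (Rmin_l x (1 - x)). pose proof (Rmin_r x (1 - x)).
      apply Rabs_def2 in Hy. apply NDir_loc; auto; lra. }
  destruct r as [|r']; [reflexivity|].
  simpl. rewrite (Derive_ext _ (Fi p n i r')).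
  - apply is_derive_unique. apply Fi_deriv; [lia|].
    destruct Hc as [Hc|Hc]; [left; lia|right; auto].
  - intros t. apply (Dn_gen _ _ (p - 1)); auto; [|lia].
    intros k y Hk. apply Fi_deriv; [lia|left; lia].
Qed.

Lemma Dn_cardN P k y : (k < P)%nat -> Derive_n (cardN P) k y = Phi P (P - k) y.
Proof.
  intros Hk. apply (Dn_gen _ (fun k y => Phi P (P - k) y) (P - 1)); [| |lia].
  - intros; rewrite cardN_D, Nat.sub_0_r; reflexivity.
  - intros kk t Hkk.
    apply (is_derive_ext (fun y => Phi P (P - kk) (1 * y + 0))).
    { intros; f_equal; ring. }
    replace (Phi P (P - S kk) t) with (1 * Phi P (P - kk - 1) (1 * t + 0)).
    + apply Phi_deriv; [lia|left; lia].
    + change (AbsRing.sort R_AbsRing) with R in *. replace (1 * t + 0) with t by ring. replace (P - kk - 1)%nat with (P - S kk)%nat by lia. ring.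
Qed.

Lemma split_at (f : R -> R) a b c l : a <= c <= b -> is_RInt f a b l ->
  exists l1 l2, is_RInt f a c l1 /\ is_RInt f c b l2 /\ l1 + l2 = l.
Proof.
  intros Hc H.
  assert (E : ex_RInt f a b) by (exists l; auto).
  assert (E1 : ex_RInt f a c) by (apply (ex_RInt_Chasles_1 f a c b); auto).
  assert (E2 : ex_RInt f c b) by (apply (ex_RInt_Chasles_2 f a c b); auto).
  exists (RInt f a c), (RInt f c b). split; [exact (RInt_correct f a c E1)|].
  split; [exact (RInt_correct f c b E2)|].
  pose proof (is_RInt_Chasles f a c b _ _ (RInt_correct f a c E1) (RInt_correct f c b E2)) as HC.
  rewrite <- (is_RInt_unique f a b l H). symmetry. apply (is_RInt_unique f a b). exact HC.
Qed.

Lemma is_RInt_pt (f g : R -> R) a b l c : a <= b ->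
  (forall x, a < x < b -> x <> c -> g x = f x) -> is_RInt f a b l -> is_RInt g a b l.
Proof.
  intros Hab Hg H.
  destruct (Rlt_dec a c) as [H1|H1]; [destruct (Rlt_dec c b) as [H2|H2]|].
  - destruct (split_at f a b c l) as [l1 [l2 [I1 [I2 E]]]]; [lra|auto|].
    rewrite <- E. apply (is_RInt_Chasles g a c b).
    + apply (is_RInt_ext f); auto. intros x Hx. rewrite Rmin_left, Rmax_right in Hx by lra.
      symmetry; apply Hg; lra.
    + apply (is_RInt_ext f); auto. intros x Hx. rewrite Rmin_left, Rmax_right in Hx by lra.
      symmetry; apply Hg; lra.
  - apply (is_RInt_ext f); auto. intros x Hx. rewrite Rmin_left, Rmax_right in Hx by lra.
    symmetry; apply Hg; lra.
  - apply (is_RInt_ext f); auto. intros x Hx. rewrite Rmin_left, Rmax_right in Hx by lra.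
    symmetry; apply Hg; lra.
Qed.

Lemma is_RInt_ae (L : list R) : forall (f g : R -> R) a b l, a <= b ->
  (forall x, a < x < b -> ~ In x L -> g x = f x) -> is_RInt f a b l -> is_RInt g a b l.
Proof.
  induction L as [|c L IH]; intros f g a b l Hab Hg H.
  - apply (is_RInt_ext f); auto. intros x Hx. rewrite Rmin_left, Rmax_right in Hx by lra.
    symmetry; apply Hg; auto.
  - set (g' := fun x => if Req_EM_T x c then f x else g x).
    apply (is_RInt_pt g' g a b l c); auto.
    { intros x Hx Hxc. unfold g'. destruct (Req_EM_T x c); [contradiction|auto]. }
    apply (IH f g' a b l); auto.
    intros x Hx Hn. unfold g'. destruct (Req_EM_T x c); auto.
    apply Hg; auto. intros [E|E]; [congruence|contradiction].
Qed.

Lemma refl0 (f : R -> R) l : is_RInt f (-1) 0 l -> is_RInt (fun y => f (- y)) 0 1 l.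
Proof.
  intros H. apply is_RInt_swap in H.
  replace 0 with (- 0) in H at 1 by ring.
  apply is_RInt_comp_opp in H. apply is_RInt_opp in H.
  eapply is_RInt_ext; [|replace l with (opp (opp l)) by (unfold opp; simpl; ring); exact H].
  intros x _. unfold opp; simpl. ring.
Qed.

Lemma refl2 (f : R -> R) l : is_RInt f 1 2 l -> is_RInt (fun y => f (2 - y)) 0 1 l.
Proof.
  intros H. apply is_RInt_swap in H.
  replace 2 with (-1 * 0 + 2) in H at 1 by ring.
  replace 1 with (-1 * 1 + 2) in H at 1 by ring.
  apply is_RInt_comp_lin in H. apply is_RInt_opp in H.
  eapply is_RInt_ext; [|replace l with (opp (opp l)) by (unfold opp; simpl; ring); exact H].
  intros x _. unfold opp, scal; simpl; unfold mult; simpl. replace (-1 * x + 2) with (2 - x) by ring. ring.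
Qed.

Lemma RInt_D (F : R -> R -> R) (L : R -> R) A B q : forall z,
  (forall k, (k <= q)%nat -> is_RInt (fun x => F x (z - INR k)) A B (L (z - INR k))) ->
  is_RInt (fun x => D q (F x) z) A B (D q L z).
Proof.
  induction q; intros z H.
  - simpl. specialize (H O (le_n _)). simpl in H. rewrite Rminus_0_r in H. exact H.
  - cbn [D]. apply (is_RInt_minus (fun x => D q (F x) z) (fun x => D q (F x) (z - 1))).
    + apply IHq. intros k Hk. apply H. lia.
    + apply IHq. intros k Hk. replace (z - 1 - INR k) with (z - INR (S k)) by (rewrite S_INR; ring).
      apply H. lia.
Qed.

Lemma beta_core b : forall a d,
  is_RInt (fun u => u ^ a * (d - u) ^ b) 0 d
    (INR (fact a) * INR (fact b) / INR (fact (a + b + 1)) * d ^ (a + b + 1)).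
Proof.
  induction b; intros a d.
  - assert (H : is_RInt (fun u => u ^ a * (d - u) ^ 0) 0 d
       (minus (d ^ (S a) / INR (S a)) (0 ^ (S a) / INR (S a)))).
    { apply (is_RInt_derive (fun u => u ^ (S a) / INR (S a))).
      - intros x _. assert (Hc : INR (S a) <> 0) by (apply not_0_INR; lia).
        assert (Hc2 : INR (S a) = INR a + 1) by apply S_INR.
        remember (INR (S a)) as c. auto_derive; auto.
        change (match a with 0%nat => 1 | S _ => INR a + 1 end) with (INR (S a)).
        rewrite <- Heqc. simpl. field. auto.
      - intros x _. apply (ex_derive_continuous (K := R_AbsRing) (V := R_NormedModule)). auto_derive. auto. }
    replace (INR (fact a) * INR (fact 0) / INR (fact (a + 0 + 1)) * d ^ (a + 0 + 1))
      with (minus (d ^ (S a) / INR (S a)) (0 ^ (S a) / INR (S a))); auto.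
    unfold minus, plus, opp; simpl.
    change (match a with 0%nat => 1 | S _ => INR a + 1 end) with (INR (S a)).
    replace (a + 0 + 1)%nat with (S a) by lia. rewrite fact_simpl, mult_INR.
    pose proof (fact_nz a). assert (INR (S a) <> 0) by (apply not_0_INR; lia).
    change (d ^ S a) with (d * d ^ a). field. split; auto.
  - set (UV := fun u => u ^ (S a) / INR (S a) * (d - u) ^ (S b)).
    assert (HSa : INR (S a) <> 0) by (apply not_0_INR; lia).
    assert (H1 : is_RInt (fun u => u ^ a * (d - u) ^ (S b)
                  - INR (S b) / INR (S a) * (u ^ (S a) * (d - u) ^ b)) 0 d (minus (UV d) (UV 0))).
    { apply (is_RInt_derive UV).
      - intros x _. unfold UV.
        assert (Hc2 : INR (S a) = INR a + 1) by apply S_INR.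
        assert (Hc3 : INR (S b) = INR b + 1) by apply S_INR.
        remember (INR (S a)) as c. remember (INR (S b)) as e. auto_derive; auto.
        change (match a with 0%nat => 1 | S _ => INR a + 1 end) with (INR (S a)).
        change (match b with 0%nat => 1 | S _ => INR b + 1 end) with (INR (S b)).
        rewrite <- Heqc, <- Heqe. simpl. replace (d + - x) with (d - x) by ring. set (X := x ^ a). set (Y := (d - x) ^ b). field. auto.
      - intros x _. apply (ex_derive_continuous (K := R_AbsRing) (V := R_NormedModule)). auto_derive. auto. }
    assert (E0 : minus (UV d) (UV 0) = 0).
    { unfold UV. replace (d - d) with 0 by ring. rewrite !pow_i by lia. unfold minus, plus, opp; simpl. set (W := (d - 0) ^ S b). set (Z := d ^ S a). field. auto. }
    rewrite E0 in H1.
    pose proof (is_RInt_scal _ _ _ (INR (S b) / INR (S a)) _ (IHb (S a) d)) as H2.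
    pose proof (is_RInt_plus _ _ _ _ _ _ H1 H2) as H3.
    eapply is_RInt_ext; [|replace (INR (fact a) * INR (fact (S b)) / INR (fact (a + S b + 1)) * d ^ (a + S b + 1))
       with (plus 0 (scal (INR (S b) / INR (S a)) (INR (fact (S a)) * INR (fact b) / INR (fact (S a + b + 1)) * d ^ (S a + b + 1)))); [exact H3|]].
    + intros x _. unfold plus, scal; simpl; unfold mult; simpl. ring.
    + match goal with |- plus 0 (scal ?k ?v) = ?w => change (0 + k * v = w) end.
      replace (S a + b + 1)%nat with (a + S b + 1)%nat by lia.
      rewrite !fact_simpl, !mult_INR. pose proof (fact_nz (a + S b + 1)).
      set (DD := d ^ (a + S b + 1)). field. auto.
Qed.

Lemma gg_nonpos m u : (1 <= m)%nat -> u <= 0 -> gg m u = 0.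
Proof.
  intros Hm Hu. unfold gg, tp. destruct (Rle_dec 0 u).
  - assert (u = 0) by lra. subst. rewrite pow_i by lia. unfold Rdiv; ring.
  - unfold Rdiv; ring.
Qed.

Lemma gg_neg0 m u : u < 0 -> gg m u = 0.
Proof. intros Hu. unfold gg, tp. destruct (Rle_dec 0 u); [lra|]. unfold Rdiv; ring. Qed.

Lemma hh_nonpos m u : u <= 0 -> hh m u = 0.
Proof. intros Hu. unfold hh, tpl. destruct (Rlt_dec 0 u); [lra|]. unfold Rdiv; ring. Qed.

Lemma is_RInt_zero (f : R -> R) A B : A <= B -> (forall x, A < x < B -> f x = 0) ->
  is_RInt f A B 0.
Proof.
  intros Hab H. apply (is_RInt_ext (fun _ => 0)).
  - intros x Hx. rewrite Rmin_left, Rmax_right in Hx by lra. symmetry; auto.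
  - pose proof (is_RInt_const (V := R_NormedModule) A B 0) as Hc.
    replace (scal (B - A) (0 : R_NormedModule)) with 0 in Hc
      by (unfold scal; simpl; unfold mult; simpl; ring).
    exact Hc.
Qed.

Lemma beta_gh a b lam al ga A B : 0 < lam -> A <= B -> lam * A <= al -> ga <= lam * B ->
  is_RInt (fun x => gg a (lam * x - al) * hh b (ga - lam * x)) A B
    (/ lam * gg (a + b + 1) (ga - al)).
Proof.
  intros Hl HAB HA HB.
  destruct (Rle_dec ga al) as [Hg|Hg].
  - rewrite gg_nonpos by (lia || lra). rewrite Rmult_0_r.
    apply is_RInt_zero; auto. intros x _.
    destruct (Rlt_dec (lam * x - al) 0).
    + rewrite gg_neg0; auto; ring.
    + rewrite hh_nonpos by lra. ring.
  - set (x1 := al / lam). set (x2 := ga / lam).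
    assert (E1 : lam * x1 = al) by (unfold x1; field; lra).
    assert (E2 : lam * x2 = ga) by (unfold x2; field; lra).
    assert (H1 : A <= x1) by (apply (Rmult_le_reg_l lam); lra).
    assert (H2 : x2 <= B) by (apply (Rmult_le_reg_l lam); lra).
    assert (H12 : x1 < x2) by (apply (Rmult_lt_reg_l lam); lra).
    assert (Z1 : is_RInt (fun x => gg a (lam * x - al) * hh b (ga - lam * x)) A x1 0).
    { apply is_RInt_zero; auto. intros x Hx.
      assert (lam * x < lam * x1) by (apply Rmult_lt_compat_l; lra).
      rewrite gg_neg0 by lra. ring. }
    assert (Z2 : is_RInt (fun x => gg a (lam * x - al) * hh b (ga - lam * x)) x2 B 0).
    { apply is_RInt_zero; auto. intros x Hx.
      assert (lam * x2 < lam * x) by (apply Rmult_lt_compat_l; lra).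
      rewrite hh_nonpos by lra. ring. }
    pose proof (beta_core b a (ga - al)) as HB0.
    replace 0 with (lam * x1 + - al) in HB0 at 1 by lra.
    replace (ga - al) with (lam * x2 + - al) in HB0 at 1 by lra.
    apply is_RInt_comp_lin in HB0.
    pose proof (fact_nz a). pose proof (fact_nz b). pose proof (fact_nz (a + b + 1)).
    apply (is_RInt_scal _ _ _ (/ (lam * INR (fact a) * INR (fact b)))) in HB0.
    assert (M : is_RInt (fun x => gg a (lam * x - al) * hh b (ga - lam * x)) x1 x2
                 (/ lam * gg (a + b + 1) (ga - al))).
    { replace (/ lam * gg (a + b + 1) (ga - al)) with
        (scal (/ (lam * INR (fact a) * INR (fact b)))
          (INR (fact a) * INR (fact b) / INR (fact (a + b + 1)) * (ga - al) ^ (a + b + 1))).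
      2:{ unfold scal; simpl; unfold mult; simpl.
        unfold gg, tp. destruct (Rle_dec 0 (ga - al)); [|lra].
        set (P := (ga - al) ^ (a + b + 1)).
        field. lra. }
      eapply is_RInt_ext; [|exact HB0].
      intros x Hx. rewrite Rmin_left, Rmax_right in Hx by lra.
      assert (lam * x1 < lam * x) by (apply Rmult_lt_compat_l; lra).
      assert (lam * x < lam * x2) by (apply Rmult_lt_compat_l; lra).
      unfold scal; simpl; unfold mult; simpl.
      unfold gg, hh, tp, tpl.
      destruct (Rle_dec 0 (lam * x - al)); [|lra].
      destruct (Rlt_dec 0 (ga - lam * x)); [|lra].
      replace (lam * x + - al) with (lam * x - al) by ring.
      replace (ga - al - (lam * x - al)) with (ga - lam * x) by lra.
      set (U := (lam * x - al) ^ a). set (W := (ga - lam * x) ^ b).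
      field. lra. }
    replace (/ lam * gg (a + b + 1) (ga - al)) with (plus (plus 0 (/ lam * gg (a + b + 1) (ga - al))) 0)
      by (unfold plus; simpl; ring).
    pose proof (is_RInt_Chasles _ A x1 x2 _ _ Z1 M) as C1.
    exact (is_RInt_Chasles _ A x2 B _ _ C1 Z2).
Qed.

Lemma conv a b q lam al ga A B : 0 < lam -> A <= B -> lam * A <= al -> ga <= lam * B ->
  is_RInt (fun x => D q (gg a) (lam * x - al) * D q (hh b) (ga - lam * x)) A B
    (/ lam * D (q + q) (gg (a + b + 1)) (ga - al)).
Proof.
  intros Hl HAB HA HB.
  set (F := fun x mu => D q (fun nu => gg a (mu + lam * x) * hh b (nu + - (lam * x))) ga).
  set (L := fun mu => D q (fun nu => / lam * gg (a + b + 1) (nu + mu)) ga).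
  assert (HF : forall x mu, F x mu = D q (hh b) (ga - lam * x) * gg a (mu + lam * x)).
  { intros x mu. unfold F.
    rewrite (D_scal q (fun nu => hh b (nu + - (lam * x)))), D_shift. replace (ga + - (lam * x)) with (ga - lam * x) by ring. ring. }
  assert (HL : D q L (- al) = / lam * D (q + q) (gg (a + b + 1)) (ga - al)).
  { unfold L. rewrite (D_ext q _ (fun mu => / lam * D q (gg (a + b + 1)) (mu + ga))).
    - rewrite D_scal, D_shift, D_comp. replace (- al + ga) with (ga - al) by ring. reflexivity.
    - intros mu. rewrite D_scal, D_shift. replace (ga + mu) with (mu + ga) by ring. reflexivity. }
  rewrite <- HL.
  apply (is_RInt_ext (fun x => D q (F x) (- al))).
  { intros x _. rewrite (D_ext q (F x) (fun mu => D q (hh b) (ga - lam * x) * gg a (mu + lam * x)))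
      by (intros; apply HF).
    rewrite D_scal, D_shift. replace (- al + lam * x) with (lam * x - al) by ring. apply Rmult_comm. }
  apply RInt_D. intros k Hk.
  unfold F, L. apply RInt_D. intros l Hl2.
  pose proof (pos_INR k). pose proof (pos_INR l).
  apply (is_RInt_ext (fun x => gg a (lam * x - (al + INR k)) * hh b ((ga - INR l) - lam * x))).
  { intros x _. f_equal; f_equal; ring. }
  replace (ga - INR l + (- al - INR k)) with ((ga - INR l) - (al + INR k)) by ring.
  replace (a + b + 1)%nat with (a + b + 1)%nat by reflexivity.
  apply beta_gh; auto; lra.
Qed.

Lemma D_ext_pts q f h : forall t, (forall k, (k <= q)%nat -> f (t - INR k) = h (t - INR k)) ->
  D q f t = D q h t.
Proof.
  induction q; intros t H.
  - simpl. specialize (H O (le_n _)). simpl in H. rewrite Rminus_0_r in H. exact H.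
  - cbn [D].
    assert (E1 : D q f t = D q h t) by (apply IHq; intros k Hk; apply H; lia).
    assert (E2 : D q f (t - 1) = D q h (t - 1)).
    { apply IHq. intros k Hk. replace (t - 1 - INR k) with (t - INR (S k)) by (rewrite S_INR; ring).
      apply H; lia. }
    rewrite E1, E2. reflexivity.
Qed.

Lemma sign_r p r : (r <= p)%nat -> (-1) ^ (S p + (p - r) + 1) = (-1) ^ r.
Proof.
  intros H. replace (S p + (p - r) + 1)%nat with (r + 2 * (p + 1 - r))%nat by lia.
  rewrite pow_add, pow_mult. replace ((-1) ^ 2) with 1 by ring. rewrite pow1. ring.
Qed.

Definition Fc (p n r : nat) (c x : R) : R :=
  Phi p (p - r) ((INR n + 1) * x - c + (INR p + 1) / 2).
Definition Gc (p n r : nat) (c x : R) : R :=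
  D (S p) (hh (p - r)) ((INR n + 1) * x - c + (INR p + 1) / 2).

Lemma FcR p n r c x c' x' : (r <= p)%nat ->
  (INR n + 1) * x' - c' + (INR p + 1) / 2 = INR (S p) - ((INR n + 1) * x - c + (INR p + 1) / 2) ->
  Fc p n r c x = (-1) ^ r * Gc p n r c' x'.
Proof.
  intros Hr E. unfold Fc, Gc, Phi. rewrite R1g by lia. rewrite sign_r by auto. rewrite E. reflexivity.
Qed.

Lemma Gc_Fc p n r c x : (forall k, (k <= S p)%nat -> (INR n + 1) * x - c + (INR p + 1) / 2 - INR k <> 0) ->
  Gc p n r c x = Fc p n r c x.
Proof.
  intros H. unfold Gc, Fc, Phi. apply D_ext_pts. intros k Hk. specialize (H k Hk).
  unfold hh, gg, tp, tpl. destruct (Rlt_dec 0 _); destruct (Rle_dec 0 _); auto; lra.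
Qed.

Lemma phi_zero p m u : (m <= p)%nat -> (u < 0 \/ INR (S p) <= u) -> Phi p m u = 0.
Proof.
  intros Hm [Hu|Hu].
  - unfold Phi. rewrite (D_ext_pts _ _ (fun _ => 0 * 0)).
    + rewrite D_scal. ring.
    + intros k Hk. rewrite gg_neg0; [ring|]. pose proof (pos_INR k). lra.
  - unfold Phi. rewrite R1g by lia. rewrite (D_ext_pts _ (hh m) (fun _ => 0 * 0)).
    + rewrite D_scal. ring.
    + intros k Hk. rewrite hh_nonpos; [ring|]. pose proof (pos_INR k). lra.
Qed.

Lemma phi2_zero P m u : (1 <= m)%nat -> u <= 0 -> Phi P m u = 0.
Proof.
  intros Hm Hu. unfold Phi. rewrite (D_ext_pts _ _ (fun _ => 0 * 0)).
  + rewrite D_scal. ring.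
  + intros k Hk. rewrite gg_nonpos; [ring|auto|]. pose proof (pos_INR k). lra.
Qed.

Lemma Fc_zero p n r c x : (r <= p)%nat ->
  ((INR n + 1) * x - c + (INR p + 1) / 2 < 0 \/ INR (S p) <= (INR n + 1) * x - c + (INR p + 1) / 2) ->
  Fc p n r c x = 0.
Proof. intros Hr H. unfold Fc. apply phi_zero; auto; lia. Qed.

Lemma full p n r c d A B : (r <= p)%nat -> A <= B ->
  (INR n + 1) * A <= c - (INR p + 1) / 2 -> d + (INR p + 1) / 2 <= (INR n + 1) * B ->
  is_RInt (fun x => Fc p n r c x * Fc p n r d x) A B
    ((-1) ^ r / (INR n + 1) * Phi (S (2 * p)) (p - r + (p - r) + 1) (d - c + INR (S p))).
Proof.
  intros Hr HAB HA HB.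
  assert (Hl : 0 < INR n + 1) by (pose proof (pos_INR n); lra).
  assert (Hq : INR (S p) = 2 * ((INR p + 1) / 2)) by (rewrite S_INR; field).
  pose proof (conv (p - r) (p - r) (S p) (INR n + 1) (c - (INR p + 1) / 2) (d + (INR p + 1) / 2) A B
    Hl HAB HA HB) as H.
  apply (is_RInt_scal _ _ _ ((-1) ^ r)) in H.
  eapply is_RInt_ext; [|replace ((-1) ^ r / (INR n + 1) * Phi (S (2 * p)) (p - r + (p - r) + 1) (d - c + INR (S p)))
     with (scal ((-1) ^ r) (/ (INR n + 1) * D (S p + S p) (gg (p - r + (p - r) + 1))
        (d + (INR p + 1) / 2 - (c - (INR p + 1) / 2)))); [exact H|]].
  - intros x _. cbv beta. match goal with |- scal ?k ?v = ?w => change (k * v = w) end.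
    unfold Fc, Phi.
    replace ((INR n + 1) * x - c + (INR p + 1) / 2) with ((INR n + 1) * x - (c - (INR p + 1) / 2)) by ring.
    replace ((INR n + 1) * x - d + (INR p + 1) / 2) with (INR (S p) - (d + (INR p + 1) / 2 - (INR n + 1) * x))
      by (rewrite Hq; ring).
    rewrite (R1g (S p) (p - r) (INR (S p) - _)) by lia. rewrite sign_r by auto.
    replace (INR (S p) - (INR (S p) - (d + (INR p + 1) / 2 - (INR n + 1) * x)))
      with (d + (INR p + 1) / 2 - (INR n + 1) * x) by ring.
    pose proof (m1pow_sq r). set (U := D (S p) (gg (p - r)) _). set (W := D (S p) (hh (p - r)) _).
    set (S := (-1) ^ r). ring.
  - match goal with |- scal ?k ?v = ?w => change (k * v = w) end. unfold Phi.
    replace (S p + S p)%nat with (S (S (2 * p))) by lia.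
    replace (d + (INR p + 1) / 2 - (c - (INR p + 1) / 2)) with (d - c + INR (S p)) by (rewrite Hq; ring).
    unfold Rdiv. ring.
Qed.

Definition ptsb (p n : nat) (b : R) : list R :=
  map (fun k => (INR k - b) / (INR n + 1)) (seq 0 (S (S p))).

Lemma notin_ptsb p n b x : ~ In x (ptsb p n b) ->
  forall k, (k <= S p)%nat -> (INR n + 1) * x + b - INR k <> 0.
Proof.
  intros H k Hk E. apply H. unfold ptsb. apply in_map_iff. exists k. split.
  - assert (0 < INR n + 1) by (pose proof (pos_INR n); lra). field_simplify; [|lra].
    replace (INR k - b) with ((INR n + 1) * x) by lra. field. lra.
  - apply in_seq. lia.
Qed.

Lemma ae_G p n r c d A B l : A <= B ->
  is_RInt (fun x => Fc p n r c x * Fc p n r d x) A B l ->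
  is_RInt (fun x => Gc p n r c x * Gc p n r d x) A B l.
Proof.
  intros HAB H.
  apply (is_RInt_ae (ptsb p n (- c + (INR p + 1) / 2) ++ ptsb p n (- d + (INR p + 1) / 2))
    (fun x => Fc p n r c x * Fc p n r d x)); auto.
  intros x _ Hx. rewrite in_app_iff in Hx.
  assert (E1 : Gc p n r c x = Fc p n r c x).
  { apply Gc_Fc. intros k Hk. replace ((INR n + 1) * x - c + (INR p + 1) / 2 - INR k)
      with ((INR n + 1) * x + (- c + (INR p + 1) / 2) - INR k) by ring.
    apply (notin_ptsb p n); auto; intro; apply Hx; left; auto. }
  assert (E2 : Gc p n r d x = Fc p n r d x).
  { apply Gc_Fc. intros k Hk. replace ((INR n + 1) * x - d + (INR p + 1) / 2 - INR k)
      with ((INR n + 1) * x + (- d + (INR p + 1) / 2) - INR k) by ring.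
    apply (notin_ptsb p n); auto; intro; apply Hx; right; auto. }
  rewrite E1, E2. reflexivity.
Qed.

Lemma T_refl0 p n r c d c' d' l : (r <= p)%nat -> c' = - c -> d' = - d ->
  is_RInt (fun x => Fc p n r c x * Fc p n r d x) (-1) 0 l ->
  is_RInt (fun x => Fc p n r c' x * Fc p n r d' x) 0 1 l.
Proof.
  intros Hr Hc Hd H. apply ae_G in H; [|lra]. apply refl0 in H.
  eapply is_RInt_ext; [|exact H]. intros x _. cbv beta. match goal with |- ?L = ?M => change (@eq R L M) end.
  rewrite (FcR p n r c' x c (- x)), (FcR p n r d' x d (- x)) by (auto; subst; rewrite S_INR; field).
  pose proof (m1pow_sq r). set (S := (-1) ^ r) in *.
  set (U := Gc p n r c (- x)). set (W := Gc p n r d (- x)).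
  transitivity (S * S * U * W); [rewrite H0; ring|ring].
Qed.

Lemma T_refl2 p n r c d c' d' l : (r <= p)%nat ->
  c' = 2 * (INR n + 1) - c -> d' = 2 * (INR n + 1) - d ->
  is_RInt (fun x => Fc p n r c x * Fc p n r d x) 1 2 l ->
  is_RInt (fun x => Fc p n r c' x * Fc p n r d' x) 0 1 l.
Proof.
  intros Hr Hc Hd H. apply ae_G in H; [|lra]. apply refl2 in H.
  eapply is_RInt_ext; [|exact H]. intros x _. cbv beta. match goal with |- ?L = ?M => change (@eq R L M) end.
  rewrite (FcR p n r c' x c (2 - x)), (FcR p n r d' x d (2 - x)) by (auto; subst; rewrite S_INR; field).
  pose proof (m1pow_sq r). set (S := (-1) ^ r) in *.
  set (U := Gc p n r c (2 - x)). set (W := Gc p n r d (2 - x)).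
  transitivity (S * S * U * W); [rewrite H0; ring|ring].
Qed.

Lemma Fi_Fc p n i r x : Fi p n i r x = (INR n + 1) ^ r *
  (Fc p n r (INR i) x - Fc p n r (- INR i) x - Fc p n r (2 * (INR n + 1) - INR i) x).
Proof.
  unfold Fi, Fc.
  replace ((INR n + 1) * x - - INR i + (INR p + 1) / 2) with ((INR n + 1) * x + INR i + (INR p + 1) / 2) by ring.
  replace ((INR n + 1) * x - (2 * (INR n + 1) - INR i) + (INR p + 1) / 2)
    with ((INR n + 1) * x + INR i - 2 * (INR n + 1) + (INR p + 1) / 2) by ring.
  reflexivity.
Qed.

Lemma lin9 (f1 f2 f3 f4 f5 f6 f7 f8 f9 : R -> R) v1 v2 v3 v4 v5 v6 v7 v8 v9 A B :
  is_RInt f1 A B v1 -> is_RInt f2 A B v2 -> is_RInt f3 A B v3 -> is_RInt f4 A B v4 ->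
  is_RInt f5 A B v5 -> is_RInt f6 A B v6 -> is_RInt f7 A B v7 -> is_RInt f8 A B v8 ->
  is_RInt f9 A B v9 ->
  is_RInt (fun x => f1 x - f2 x - f3 x - f4 x + f5 x + f6 x - f7 x + f8 x + f9 x) A B
    (v1 - v2 - v3 - v4 + v5 + v6 - v7 + v8 + v9).
Proof.
  intros H1 H2 H3 H4 H5 H6 H7 H8 H9.
  pose proof (is_RInt_minus _ _ _ _ _ _ H1 H2) as G.
  pose proof (is_RInt_minus _ _ _ _ _ _ G H3) as G2.
  pose proof (is_RInt_minus _ _ _ _ _ _ G2 H4) as G3.
  pose proof (is_RInt_plus _ _ _ _ _ _ G3 H5) as G4.
  pose proof (is_RInt_plus _ _ _ _ _ _ G4 H6) as G5.
  pose proof (is_RInt_minus _ _ _ _ _ _ G5 H7) as G6.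
  pose proof (is_RInt_plus _ _ _ _ _ _ G6 H8) as G7.
  pose proof (is_RInt_plus _ _ _ _ _ _ G7 H9) as G8.
  exact G8.
Qed.

Lemma pz lam r : 0 < lam -> powerRZ lam (2 * Z.of_nat r - 1) = lam ^ r * lam ^ r * / lam.
Proof.
  intros H. replace (2 * Z.of_nat r - 1)%Z with (Z.of_nat (r + r) + (-1))%Z by lia.
  rewrite powerRZ_add by lra. rewrite <- pow_powerRZ. rewrite pow_add. simpl. field. lra.
Qed.

Lemma alpha_val p r k : (1 <= p)%nat -> (r <= p)%nat ->
  alpha p r k = (-1) ^ r * Phi (S (2 * p)) (p - r + (p - r) + 1) (INR (S p) - INR k).
Proof.
  intros Hp Hr. unfold alpha. destruct (Nat.leb k p) eqn:E.
  - rewrite Dn_cardN by lia.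
    replace (2 * p + 1)%nat with (S (2 * p)) by lia.
    replace (S (2 * p) - 2 * r)%nat with (p - r + (p - r) + 1)%nat by lia.
    replace (p + 1)%nat with (S p) by lia. reflexivity.
  - apply Nat.leb_gt in E. rewrite phi2_zero; [ring|lia|].
    assert (INR (S p) <= INR k) by (apply le_INR; lia). lra.
Qed.

Theorem mainTheorem3 (p n r : nat) :
  (1 <= p)%nat -> (1 <= n)%nat -> (r <= p)%nat ->
  (Nat.max (p + 1) (p + p / 2 - 1) <= n)%nat ->
  forall i j : nat, (1 <= i <= n)%nat -> (1 <= j <= n)%nat ->
    Xmat p r n i j
    = powerRZ (INR n + 1) (2 * Z.of_nat r - 1)
      * (Tmat p r i j - Hmat p r n i j).
Proof.
  intros Hp Hn1 Hr Hmax i j Hi Hj.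
  assert (Hn : (p + 1 <= n)%nat) by (pose proof (Nat.le_max_l (p + 1) (p + p / 2 - 1)); lia).
  assert (R1 : 1 <= INR p) by (apply (le_INR 1); lia).
  assert (R2 : INR p + 1 <= INR n) by (rewrite <- S_INR; apply le_INR; lia).
  assert (R3 : 1 <= INR i) by (apply (le_INR 1); lia).
  assert (R4 : INR i <= INR n) by (apply le_INR; lia).
  assert (R5 : 1 <= INR j) by (apply (le_INR 1); lia).
  assert (R6 : INR j <= INR n) by (apply le_INR; lia).
  assert (Hq : INR (S p) = INR p + 1) by apply S_INR.
  set (m := (p - r + (p - r) + 1)%nat).
  set (V := fun k => (-1) ^ r / (INR n + 1) * Phi (S (2 * p)) m (INR (S p) - k)).
  set (FF := Fc p n r).
  set (ci := INR i). set (cj := INR j). set (L2 := 2 * (INR n + 1)).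
  assert (F1 : is_RInt (fun x => FF ci x * FF cj x) (-1) 2 (V (INR ((i - j) + (j - i))))).
  { destruct (le_lt_dec j i) as [Hij|Hij].
    - replace (V (INR ((i - j) + (j - i)))) with
        ((-1) ^ r / (INR n + 1) * Phi (S (2 * p)) m (cj - ci + INR (S p))).
      + apply full; auto; unfold ci, cj; lra.
      + unfold V. f_equal. f_equal. replace (j - i)%nat with 0%nat by lia.
        rewrite Nat.add_0_r, minus_INR by lia. unfold ci, cj. ring.
    - replace (V (INR ((i - j) + (j - i)))) with
        ((-1) ^ r / (INR n + 1) * Phi (S (2 * p)) m (ci - cj + INR (S p))).
      + eapply is_RInt_ext; [|apply (full p n r cj ci); auto; unfold ci, cj; lra].
        intros x _. apply Rmult_comm.
      + unfold V. f_equal. f_equal. replace (i - j)%nat with 0%nat by lia.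
        rewrite Nat.add_0_l, minus_INR by lia. unfold ci, cj. ring. }
  assert (F2 : is_RInt (fun x => FF ci x * FF (- cj) x) (-1) 1 (V (INR (i + j)))).
  { replace (V (INR (i + j))) with
        ((-1) ^ r / (INR n + 1) * Phi (S (2 * p)) m (- cj - ci + INR (S p))).
    + apply full; auto; unfold ci, cj; lra.
    + unfold V. rewrite plus_INR. f_equal. f_equal. unfold ci, cj. ring. }
  assert (F3 : is_RInt (fun x => FF ci x * FF (L2 - cj) x) 0 2 (V (INR (2 * n + 2 - i - j)))).
  { replace (V (INR (2 * n + 2 - i - j))) with
        ((-1) ^ r / (INR n + 1) * Phi (S (2 * p)) m (ci - (L2 - cj) + INR (S p))).
    + eapply is_RInt_ext; [|apply (full p n r (L2 - cj) ci); auto; unfold L2, ci, cj; lra].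
      intros x _. apply Rmult_comm.
    + unfold V. f_equal. f_equal. rewrite !minus_INR by lia. rewrite plus_INR, mult_INR.
      unfold L2, ci, cj. simpl. ring. }
  destruct (split_at _ (-1) 2 0 _ ltac:(lra) F1) as [Ia [Rr [HIa [HR EIa]]]].
  destruct (split_at _ 0 2 1 _ ltac:(lra) HR) as [Ib [Ic [HIb [HIc EIb]]]].
  destruct (split_at _ (-1) 1 0 _ ltac:(lra) F2) as [Ja [Jb [HJa [HJb EJ]]]].
  destruct (split_at _ 0 2 1 _ ltac:(lra) F3) as [Kb [Kc [HKb [HKc EK]]]].
  assert (T2 : is_RInt (fun x => FF (- ci) x * FF (- cj) x) 0 1 Ia)
    by (apply (T_refl0 p n r ci cj); auto).
  assert (T3 : is_RInt (fun x => FF (L2 - ci) x * FF (L2 - cj) x) 0 1 Ic)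
    by (apply (T_refl2 p n r ci cj); auto).
  assert (T5 : is_RInt (fun x => FF (- ci) x * FF cj x) 0 1 Ja)
    by (apply (T_refl0 p n r ci (- cj)); auto; ring).
  assert (T7 : is_RInt (fun x => FF (L2 - ci) x * FF cj x) 0 1 Kc)
    by (apply (T_refl2 p n r ci (L2 - cj)); auto; unfold L2; ring).
  assert (T8 : is_RInt (fun x => FF (- ci) x * FF (L2 - cj) x) 0 1 0).
  { apply is_RInt_zero; [lra|]. intros x _. unfold FF.
    destruct (Rle_dec (INR (S p)) ((INR n + 1) * x - - ci + (INR p + 1) / 2)).
    - rewrite (Fc_zero p n r (- ci)); auto. ring.
    - rewrite (Fc_zero p n r (L2 - cj)); auto. ring. left. unfold L2, ci, cj in *. lra. }
  assert (T9 : is_RInt (fun x => FF (L2 - ci) x * FF (- cj) x) 0 1 0).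
  { apply is_RInt_zero; [lra|]. intros x _. unfold FF.
    destruct (Rle_dec (INR (S p)) ((INR n + 1) * x - - cj + (INR p + 1) / 2)).
    - rewrite (Fc_zero p n r (- cj)); auto. ring.
    - rewrite (Fc_zero p n r (L2 - ci)); auto. ring. left. unfold L2, ci, cj in *. lra. }
  pose proof (lin9 _ _ _ _ _ _ _ _ _ _ _ _ _ _ _ _ _ _ 0 1 HIb HJb HKb T5 T2 T8 T7 T9 T3) as HL.
  apply (is_RInt_scal _ _ _ ((INR n + 1) ^ r * (INR n + 1) ^ r)) in HL.
  assert (HF : is_RInt (fun x => Fi p n i r x * Fi p n j r x) 0 1
     (scal ((INR n + 1) ^ r * (INR n + 1) ^ r) (Ib - Jb - Kb - Ja + Ia + 0 - Kc + 0 + Ic))).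
  { eapply is_RInt_ext; [|exact HL]. intros x _. cbv beta.
    match goal with |- ?L = ?M => change (@eq R L M) end.
    unfold scal; simpl; unfold mult; simpl. rewrite !Fi_Fc. fold FF ci cj L2.
    set (Lr := (INR n + 1) ^ r). ring. }
  assert (HX : is_RInt (fun x => Derive_n (NDir p n i) r x * Derive_n (NDir p n j) r x) 0 1
     (scal ((INR n + 1) ^ r * (INR n + 1) ^ r) (Ib - Jb - Kb - Ja + Ia + 0 - Kc + 0 + Ic))).
  { set (s := (INR p + 1) / 2).
    apply (is_RInt_ae (ptsb p n (- INR i + s) ++ ptsb p n (INR i + s) ++
                       ptsb p n (INR i - 2 * (INR n + 1) + s) ++
                       ptsb p n (- INR j + s) ++ ptsb p n (INR j + s) ++
                       ptsb p n (INR j - 2 * (INR n + 1) + s)) (fun x => Fi p n i r x * Fi p n j r x) _ 0 1 _ ltac:(lra)); [|exact HF].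
    intros x Hx Hn'. rewrite !in_app_iff in Hn'.
    rewrite !Dn_NDir; auto; right; intros k Hk; repeat split; apply (notin_ptsb p n); auto;
      intro; apply Hn'; tauto. }
  unfold Xmat. rewrite (is_RInt_unique _ _ _ _ HX).
  unfold Tmat, Hmat. rewrite !alpha_val by auto.
  rewrite pz by (pose proof (pos_INR n); lra).
  match goal with |- scal ?k ?v = ?w => change (k * v = w) end.
  assert (E1 : Ia + Ib + Ic = V (INR ((i - j) + (j - i)))).
  { rewrite <- EIa, <- EIb. ring. }
  assert (E2 : Ja + Jb = V (INR (i + j))) by (rewrite <- EJ; ring).
  assert (E3 : Kb + Kc = V (INR (2 * n + 2 - i - j))) by (rewrite <- EK; ring).
  unfold V in E1, E2, E3.
  replace (Ib - Jb - Kb - Ja + Ia + 0 - Kc + 0 + Ic) with ((Ia + Ib + Ic) - (Ja + Jb) - (Kb + Kc)) by ring.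
  rewrite E1, E2, E3.
  assert (0 < INR n + 1) by (pose proof (pos_INR n); lra).
  change (p - r + (p - r) + 1)%nat with m. set (Lr := (INR n + 1) ^ r). set (Sg := (-1) ^ r).
  set (P1 := Phi (S (2 * p)) m (INR (S p) - INR ((i - j) + (j - i)))).
  set (P2 := Phi (S (2 * p)) m (INR (S p) - INR (i + j))).
  set (P3 := Phi (S (2 * p)) m (INR (S p) - INR (2 * n + 2 - i - j))).
  field. lra.
Qed.
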